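(* For every $m\in\mathbb{N}_0$ and every real $t$ with $|t|<1$, \[ \frac{(\arcsin t)^{m}}{\sqrt{1-t^2}}=t^m\left[1+\sum_{k=1}^{\infty}(-1)^k\frac{Q(m+1,2k;2)}{\binom{m+2k}{m}}\frac{(2t)^{2k}}{(2k)!}\right]. \]
   Context: $s(n,k)$ ($n\ge k\ge 0$) denotes the signed Stirling numbers of the first kind, defined by $\frac{[\ln(1+x)]^k}{k!}=\sum_{n=k}^\infty s(n,k)\frac{x^n}{n!}$ for $|x|<1$; equivalently $\prod_{j=0}^{n-1}(z-j)=\sum_{k=0}^n s(n,k)z^k$. For $m\in\mathbb{N}$, $k\in\mathbb{N}_0$ and $\alpha\in\mathbb{R}$ define \[ Q(m,k;\alpha)=\sum_{\ell=0}^{k}\binom{m+\ell-1}{m-1}\, s(m+k-1,m+\ell-1)\left(\frac{m+k-\alpha}{2}\right)^{\ell}, \] with the convention $0^0=1$. *)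

(* Defs.v *)
From Stdlib Require Import Reals ZArith Lia Lra.
From Coquelicot Require Import Coquelicot.
Open Scope R_scope.

(* Signed Stirling numbers of the first kind s(n,k), via the standard
   recurrence coming from prod_{j<n+1}(z-j) = (z-n) prod_{j<n}(z-j):
   s(0,0)=1, s(0,k+1)=0, s(n+1,0)=0, s(n+1,k+1) = s(n,k) - n s(n,k+1). *)
Fixpoint stirling1 (n k : nat) : Z :=
  match n, k with
  | O, O => 1%Z
  | O, S _ => 0%Z
  | S _, O => 0%Z
  | S n', S k' => (stirling1 n' k' - Z.of_nat n' * stirling1 n' (S k'))%Z
  end.

(* Q(m,k;alpha) = sum_{l=0}^k C(m+l-1,m-1) s(m+k-1,m+l-1) ((m+k-alpha)/2)^l,
   with 0^0 = 1 (Stdlib pow satisfies x^0 = 1). Intended for m >= 1. *)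
Definition Qf (m k : nat) (alpha : R) : R :=
  sum_f_R0 (fun l => Binomial.C (m + l - 1)%nat (m - 1)%nat
                     * IZR (stirling1 (m + k - 1)%nat (m + l - 1)%nat)
                     * ((INR (m + k)%nat - alpha) / 2) ^ l) k.

Definition cor_term (m : nat) (t : R) (k : nat) : R :=
  (-1) ^ k * (Qf (m + 1)%nat (2 * k)%nat 2 / Binomial.C (m + 2 * k)%nat m)
  * ((2 * t) ^ (2 * k)%nat / INR (fact (2 * k)%nat)).

(* Main.v *)
Require Import Defs.
From Stdlib Require Import Reals Lia Lra.
From Coquelicot Require Import Coquelicot.
Open Scope R_scope.

Fixpoint Tc (N : nat) (y : R) (m : nat) : R :=
  match N with
  | O => match m with O => 1 | S _ => 0 end
  | S N' => match m with
            | O => (y - INR N') * Tc N' y O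
            | S m' => Tc N' y m' + (y - INR N') * Tc N' y (S m')
            end
  end.

Definition Tm1 N y m := match m with O => 0 | S m' => Tc N y m' end.
Definition Tm2 N y m := match m with S (S m') => Tc N y m' | _ => 0 end.

Lemma Tm1_S N y m : Tm1 N y (S m) = Tc N y m. Proof. reflexivity. Qed.
Lemma Tm1_0 N y : Tm1 N y 0 = 0. Proof. reflexivity. Qed.
Lemma Tm2_SS N y m : Tm2 N y (S (S m)) = Tc N y m. Proof. reflexivity. Qed.
Lemma Tm2_0 N y : Tm2 N y 0 = 0. Proof. reflexivity. Qed.
Lemma Tm2_1 N y : Tm2 N y 1 = 0. Proof. reflexivity. Qed.

Lemma Tc_rec1 N y m : Tc (S N) y m = Tm1 N y m + (y - INR N) * Tc N y m.
Proof. destruct m; simpl; ring. Qed.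

Lemma Tc_rec2 N : forall y m, Tc (S N) y m = Tm1 N (y-1) m + y * Tc N (y-1) m.
Proof.
  induction N as [|N IH]; intros y m.
  - destruct m as [|[|m]]; simpl; ring.
  - rewrite Tc_rec1. destruct m as [|m].
    + rewrite ?Tm1_S, ?Tm1_0. rewrite (IH y 0%nat), Tc_rec1. rewrite ?Tm1_S, ?Tm1_0. rewrite S_INR. ring.
    + rewrite ?Tm1_S, ?Tm1_0. rewrite (IH y m), (IH y (S m)), (Tc_rec1 N (y-1) m), (Tc_rec1 N (y-1) (S m)). rewrite S_INR.
      destruct m; rewrite ?Tm1_S, ?Tm1_0; ring.
Qed.

Lemma Tc_rec3 N y m :
  Tc (S (S N)) y m = Tm2 N (y-1) m + (y - 1 - INR N) * y * Tc N (y-1) m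
   + (y - 1 - INR N + y) * Tm1 N (y-1) m.
Proof.
  rewrite Tc_rec2. rewrite Tc_rec1.
  destruct m as [|m]; rewrite ?Tm1_S, ?Tm1_0; rewrite ?Tm2_SS, ?Tm2_0, ?Tm2_1.
  - ring.
  - rewrite Tc_rec1. destruct m; rewrite ?Tm1_S, ?Tm1_0, ?Tm2_SS, ?Tm2_0, ?Tm2_1; ring.
Qed.

Lemma Tc_vanish N : forall y m, (N < m)%nat -> Tc N y m = 0.
Proof.
  induction N as [|N IH]; intros y m H.
  - destruct m; [lia|reflexivity].
  - rewrite Tc_rec1. destruct m as [|m]; [lia|]. rewrite ?Tm1_S, ?Tm1_0.
    rewrite !IH by lia. ring.
Qed.

Lemma Tc_top N : forall y, Tc N y N = 1.
Proof.
  induction N as [|N IH]; intros y; [reflexivity|].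
  rewrite Tc_rec1. rewrite ?Tm1_S, ?Tm1_0. rewrite IH, Tc_vanish by lia. ring.
Qed.

Lemma stir_vanish N : forall j, (N < j)%nat -> stirling1 N j = 0%Z.
Proof.
  induction N as [|N IH]; intros j H.
  - destruct j; [lia|reflexivity].
  - destruct j as [|j]; [lia|]. simpl. rewrite !IH by lia. lia.
Qed.

Lemma stir_S N j : stirling1 (S N) (S j) = (stirling1 N j - Z.of_nat N * stirling1 N (S j))%Z.
Proof. reflexivity. Qed.

Lemma sum_scal_l c (f : nat -> R) K :
  sum_f_R0 (fun i => c * f i) K = c * sum_f_R0 f K.
Proof. rewrite scal_sum. apply sum_eq. intros; ring. Qed.

Lemma shift_sum m (a : nat -> R) K :
  sum_f_R0 (fun l => Binomial.C (S m + l) (S m) * a l) K =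
  sum_f_R0 (fun l => Binomial.C (m + l) m * a l) (S K)
  + sum_f_R0 (fun l => Binomial.C (S m + l) (S m) * a (S l)) K
  - Binomial.C (S (S m) + K) (S m) * a (S K).
Proof.
  induction K as [|K IH].
  - simpl sum_f_R0. rewrite !Nat.add_0_r, C_n_n.
    replace (m + 1)%nat with (S m) by lia.
    pose proof (pascal (S m) m ltac:(lia)) as H. rewrite C_n_n in *.
    rewrite <- H. ring.
  - rewrite tech5, IH, !tech5.
    pose proof (pascal (m + S (S K)) m ltac:(lia)) as H.
    replace (S m + S K)%nat with (m + S (S K))%nat by lia.
    replace (S (S m) + S K)%nat with (S (m + S (S K)))%nat by lia.
    replace (S (S m) + K)%nat with (m + S (S K))%nat by lia.
    rewrite <- H. ring.
Qed.

Lemma shift0 (a : nat -> R) K :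
  sum_f_R0 (fun l => match l with O => 0 | S j => a j end) K =
  sum_f_R0 a K - a K.
Proof.
  induction K as [|K IH].
  - simpl. ring.
  - rewrite tech5, IH, tech5. ring.
Qed.

Lemma stir_sum N : forall y m K, (N <= m + K)%nat ->
  sum_f_R0 (fun l => Binomial.C (m+l) m * IZR (stirling1 N (m+l)) * y^l) K = Tc N y m.
Proof.
  induction N as [|N IH]; intros y m K HK.
  - destruct m as [|m].
    + simpl. destruct K as [|K].
      * simpl. rewrite C_n_n. ring.
      * rewrite decomp_sum by lia. simpl pred.
        rewrite sum_eq with (Bn := fun _ => 0).
        { rewrite sum_cte. simpl. rewrite C_n_n. ring. }
        intros i _. simpl. ring.
    + simpl Tc. rewrite sum_eq with (Bn := fun _ => 0).
      { rewrite sum_cte. ring. }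
      intros i _. replace (S m + i)%nat with (S (m+i)) by lia. simpl. ring.
  - rewrite Tc_rec1. destruct m as [|m].
    + rewrite Tm1_0.
      rewrite <- (IH y 0%nat K) by lia.
      rewrite sum_eq with (Bn := fun l =>
        (match l with O => 0 | S j => IZR (stirling1 N j) * y ^ S j end)
        - INR N * (Binomial.C (0 + l) 0 * IZR (stirling1 N (0 + l)) * y ^ l)).
      2:{ intros i _. simpl plus. rewrite C_n_0. destruct i as [|i].
          - simpl. destruct N; simpl; ring.
          - change (0 + S i)%nat with (S i). rewrite stir_S, minus_IZR, mult_IZR, <- INR_IZR_INZ. simpl pow. ring. }
      rewrite minus_sum, shift0, sum_scal_l.
      rewrite (stir_vanish N K) by lia.
      rewrite (sum_eq (fun l => IZR (stirling1 N l) * y ^ S l)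
                 (fun l => Binomial.C (0 + l) 0 * IZR (stirling1 N (0 + l)) * y ^ l * y)).
      2:{ intros i _. simpl plus. rewrite C_n_0. simpl. ring. }
      rewrite <- scal_sum. ring.
    + rewrite Tm1_S.
      rewrite <- (IH y m (S K)) by lia.
      rewrite <- (IH y (S m) K) by lia.
      rewrite sum_eq with (Bn := fun l =>
        Binomial.C (S m + l) (S m) * (IZR (stirling1 N (m + l)) * y ^ l)
        - INR N * (Binomial.C (S m + l) (S m) * IZR (stirling1 N (S m + l)) * y ^ l)).
      2:{ intros i _. replace (S m + i)%nat with (S (m + i)) by lia.
          rewrite stir_S, minus_IZR, mult_IZR, <- INR_IZR_INZ. ring. }
      rewrite minus_sum, sum_scal_l.
      rewrite (shift_sum m (fun l => IZR (stirling1 N (m + l)) * y ^ l)).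
      rewrite (stir_vanish N (m + S K)) by lia.
      rewrite (sum_eq (fun l => Binomial.C (S m + l) (S m) * (IZR (stirling1 N (m + S l)) * y ^ S l))
                 (fun l => Binomial.C (S m + l) (S m) * IZR (stirling1 N (S m + l)) * y ^ l * y)).
      2:{ intros i _. replace (m + S i)%nat with (S m + i)%nat by lia. simpl pow. ring. }
      rewrite <- scal_sum.
      rewrite (sum_eq (fun l => Binomial.C (m + l) m * (IZR (stirling1 N (m + l)) * y ^ l))
                 (fun l => Binomial.C (m + l) m * IZR (stirling1 N (m + l)) * y ^ l)).
      2:{ intros i _. ring. }
      ring.
Qed.

Definition E (m k : nat) : R :=
  (-4) ^ k * INR (Factorial.fact m) / INR (Factorial.fact (m + 2 * k))
  * Tc (m + 2 * k) ((INR (m + 2 * k) - 1) / 2) m.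

Lemma Qf_Tc m k :
  Qf (m + 1) (2 * k) 2 = Tc (m + 2 * k) ((INR (m + 2 * k) - 1) / 2) m.
Proof.
  unfold Qf. rewrite <- (stir_sum (m + 2 * k) _ m (2 * k)) by lia.
  apply sum_eq. intros i _.
  replace (m + 1 + i - 1)%nat with (m + i)%nat by lia.
  replace (m + 1 - 1)%nat with m by lia.
  replace (m + 1 + 2 * k - 1)%nat with (m + 2 * k)%nat by lia.
  replace (m + 1 + 2 * k)%nat with (S (m + 2 * k)) by lia.
  rewrite S_INR. replace (INR (m + 2 * k) + 1 - 2) with (INR (m + 2 * k) - 1) by ring.
  reflexivity.
Qed.

Lemma cor_term_E m t k : cor_term m t k = E m k * (t ^ 2) ^ k.
Proof.
  unfold cor_term, E. rewrite Qf_Tc. unfold Binomial.C.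
  replace (m + 2 * k - m)%nat with (2 * k)%nat by lia.
  rewrite !pow_mult. rewrite !Rpow_mult_distr.
  replace ((-4) ^ k) with ((-1) ^ k * (2 ^ 2) ^ k).
  2:{ rewrite <- Rpow_mult_distr. f_equal. ring. }
  pose proof (INR_fact_neq_0 m). pose proof (INR_fact_neq_0 (m + 2 * k)).
  pose proof (INR_fact_neq_0 (2 * k)).
  field. auto.
Qed.

Lemma E0 m : E m 0 = 1.
Proof.
  unfold E. replace (m + 2 * 0)%nat with m by lia. rewrite Tc_top.
  pose proof (INR_fact_neq_0 m). simpl pow. field. auto.
Qed.

Lemma E_rec m k :
  INR (m + 2 * k + 2) * E m (S k) =
  INR (m + 2 * k + 1) * E m k
  + (-4) ^ (S k) * INR (Factorial.fact m) / INR (Factorial.fact (m + 2 * k + 1))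
    * Tm2 (m + 2 * k) ((INR (m + 2 * k) - 1) / 2) m.
Proof.
  unfold E.
  replace (m + 2 * S k)%nat with (S (S (m + 2 * k))) by lia.
  rewrite Tc_rec3.
  set (N := (m + 2 * k)%nat).
  replace (N + 2)%nat with (S (S N)) by lia.
  replace (N + 1)%nat with (S N) by lia.
  replace ((INR (S (S N)) - 1) / 2 - 1) with ((INR N - 1) / 2) by (rewrite !S_INR; field).
  replace (Factorial.fact (S (S N))) with (S (S N) * (S N * Factorial.fact N))%nat by reflexivity.
  replace (Factorial.fact (S N)) with (S N * Factorial.fact N)%nat by reflexivity.
  rewrite !mult_INR. rewrite !S_INR.
  pose proof (INR_fact_neq_0 m). pose proof (INR_fact_neq_0 N).
  pose proof (pos_INR N).
  simpl pow. field. repeat split; auto; lra.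
Qed.

Lemma E_rec01 m k : (m <= 1)%nat ->
  INR (m + 2 * k + 2) * E m (S k) = INR (m + 2 * k + 1) * E m k.
Proof.
  intros Hm. rewrite E_rec. destruct m as [|[|m]]; [| |lia];
  rewrite ?Tm2_0, ?Tm2_1; ring.
Qed.

Lemma E_rec2 m k :
  INR (m + 2 + 2 * k + 2) * E (m + 2) (S k) =
  INR (m + 2 + 2 * k + 1) * E (m + 2) k
  + INR ((m + 2) * (m + 1)) / INR (m + 2 + 2 * k + 1) * E m (S k).
Proof.
  rewrite E_rec. replace (m + 2)%nat with (S (S m)) by lia. rewrite Tm2_SS.
  unfold E at 3.
  replace (m + 2 * S k)%nat with (S (S m) + 2 * k)%nat by lia.
  replace (Factorial.fact (S (S m))) with (S (S m) * (S m * Factorial.fact m))%nat by reflexivity.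
  replace (S (S m) + 2 * k + 1)%nat with (S (S (S m) + 2 * k)) by lia.
  replace (Factorial.fact (S (S (S m) + 2 * k))) with (S (S (S m) + 2 * k) * Factorial.fact (S (S m) + 2 * k))%nat by reflexivity.
  rewrite !mult_INR.
  pose proof (INR_fact_neq_0 m). pose proof (INR_fact_neq_0 (S (S m) + 2 * k)).
  pose proof (pos_INR (S (S m) + 2 * k)).
  rewrite !S_INR in *. replace (m + 1)%nat with (S m) by lia. rewrite S_INR.
  field. lra.
Qed.

Lemma E_bound01 m k : (m <= 1)%nat -> Rabs (E m k) <= INR (Factorial.fact m).
Proof.
  intros Hm. induction k as [|k IH].
  - rewrite E0. rewrite Rabs_R1. pose proof (INR_fact_lt_0 m). 
    assert (1 <= INR (Factorial.fact m)) by (apply (le_INR 1); apply Factorial.lt_O_fact). lra.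
  - pose proof (E_rec01 m k Hm) as H.
    set (a := INR (m + 2 * k + 2)) in *. set (b := INR (m + 2 * k + 1)) in *.
    assert (Ha : a = b + 1) by (unfold a, b; replace (m + 2 * k + 2)%nat with (S (m + 2 * k + 1)) by lia; rewrite S_INR; ring).
    assert (Hb : 0 <= b) by apply pos_INR.
    assert (E m (S k) = b / a * E m k) as ->.
    { apply (Rmult_eq_reg_l a); [| lra]. rewrite H. field. lra. }
    rewrite Rabs_mult. rewrite (Rabs_right (b / a)).
    2:{ apply Rle_ge. apply Rdiv_le_0_compat; lra. }
    assert (b / a <= 1).
    { apply Rmult_le_reg_r with a; [lra|]. unfold Rdiv. rewrite Rmult_assoc, Rinv_l by lra. lra. }
    assert (0 <= b / a) by (apply Rdiv_le_0_compat; lra).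
    pose proof (Rabs_pos (E m k)).
    apply Rle_trans with (1 * Rabs (E m k)); [apply Rmult_le_compat_r; lra | lra].
Qed.

Lemma E_bound_all : forall m, (forall k, Rabs (E m k) <= INR (Factorial.fact m)) /\
                          (forall k, Rabs (E (S m) k) <= INR (Factorial.fact (S m))).
Proof.
  induction m as [|m [IH1 IH2]].
  - split; intros k; apply E_bound01; lia.
  - split; [exact IH2|]. intros k.
    replace (S (S m)) with (m + 2)%nat by lia.
    set (F := INR (Factorial.fact (m + 2))).
    assert (HF : F = INR ((m + 2) * (m + 1)) * INR (Factorial.fact m)).
    { unfold F. rewrite <- mult_INR. f_equal.
      replace (m + 2)%nat with (S (S m)) by lia. replace (m + 1)%nat with (S m) by lia.
      simpl. lia. }
    assert (HF0 : 0 <= INR (Factorial.fact m)) by apply pos_INR.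
    assert (Hc : 0 <= INR ((m + 2) * (m + 1))) by apply pos_INR.
    induction k as [|k IHk].
    + rewrite E0, Rabs_R1. unfold F. apply (le_INR 1). apply Factorial.lt_O_fact.
    + pose proof (E_rec2 m k) as H.
      set (a := INR (m + 2 + 2 * k + 2)) in *. set (b := INR (m + 2 + 2 * k + 1)) in *.
      set (c := INR ((m + 2) * (m + 1))) in *.
      assert (Ha : a = b + 1) by (unfold a, b; replace (m + 2 + 2 * k + 2)%nat with (S (m + 2 + 2 * k + 1)) by lia; rewrite S_INR; ring).
      assert (Hb : 1 <= b) by (unfold b; apply (le_INR 1); lia).
      pose proof (IH1 (S k)) as Hm.
      assert (E (m + 2) (S k) = (b * E (m + 2) k + c / b * E m (S k)) / a) as ->.
      { apply (Rmult_eq_reg_l a); [| lra]. rewrite H. field. lra. }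
      unfold Rdiv. rewrite Rabs_mult, Rabs_inv, (Rabs_right a) by lra.
      apply (Rmult_le_reg_r a); [lra|]. rewrite Rmult_assoc, Rinv_l, Rmult_1_r by lra.
      eapply Rle_trans; [apply Rabs_triang|].
      rewrite !Rabs_mult, Rabs_right by lra.
      rewrite (Rabs_right (/ b)) by (apply Rle_ge; left; apply Rinv_0_lt_compat; lra).
      rewrite (Rabs_right c) by lra.
      assert (Hib : 0 < / b <= 1).
      { split. apply Rinv_0_lt_compat; lra. rewrite <- Rinv_1. apply Rinv_le_contravar; lra. }
      assert (c * / b * Rabs (E m (S k)) <= c * INR (Factorial.fact m)).
      { pose proof (Rabs_pos (E m (S k))).
        apply Rle_trans with (c * 1 * Rabs (E m (S k))).
        - apply Rmult_le_compat_r; [lra|]. apply Rmult_le_compat_l; lra.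
        - rewrite Rmult_1_r. apply Rmult_le_compat_l; lra. }
      rewrite Ha. rewrite HF in IHk |- *. fold c in IHk |- *. nra.
Qed.

Lemma E_bound m k : Rabs (E m k) <= INR (Factorial.fact m).
Proof. apply (proj1 (E_bound_all m)). Qed.
Lemma is_series_zero : is_series (fun _ : nat => 0) 0.
Proof.
  pose proof (@is_pseries_0 R_AbsRing R_NormedModule (fun _ => 0)) as H.
  unfold is_pseries in H.
  eapply is_series_ext; [|exact H]. intros n. simpl. change (scal (pow_n zero n) 0 = 0).
  unfold scal; simpl. unfold mult; simpl. apply Rmult_0_r.
Qed.

Lemma is_pseries_const (c x : R) :
  is_pseries (fun n => match n with O => c | S _ => 0 end) x c.
Proof.
  apply is_pseries_R. apply is_series_decr_1. simpl.
  match goal with |- is_series _ ?l => replace l with 0 end.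
  2:{ unfold plus, opp; simpl. ring. }
  eapply is_series_ext; [|apply is_series_zero]. intros n. simpl. ring.
Qed.

Lemma is_pseries_lin (a b : nat -> R) x la lb u v :
  is_pseries a x la -> is_pseries b x lb ->
  is_pseries (fun n => u * a n + v * b n) x (u * la + v * lb).
Proof.
  rewrite !is_pseries_R. intros Ha Hb.
  pose proof (is_series_plus _ _ _ _ (is_series_scal u _ _ Ha) (is_series_scal v _ _ Hb)) as H.
  eapply is_series_ext; [|exact H]. intros n. simpl. unfold plus, scal; simpl. unfold mult; simpl. ring.
Qed.

Lemma is_pseries_shift (a : nat -> R) x l :
  is_pseries a x l -> is_pseries (fun n => match n with O => 0 | S j => a j end) x (x * l).
Proof.
  intros H. apply is_pseries_incr_1 in H. exact H.
Qed.

Lemma radius_ge1 (a : nat -> R) M x :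
  (forall n, Rabs (a n) <= M) -> Rabs x < 1 -> Rbar_lt (Rabs x) (CV_radius a).
Proof.
  intros Ha Hx.
  set (r := (Rabs x + 1) / 2).
  assert (Hr0 : 0 <= r) by (unfold r; pose proof (Rabs_pos x); lra).
  assert (Hr1 : r < 1) by (unfold r; lra).
  destruct (CV_radius_bounded a) as [Hub _].
  apply Rbar_lt_le_trans with (Finite r).
  - simpl. unfold r. lra.
  - apply Hub. exists M. intros n. rewrite Rabs_mult, <- RPow_abs, (Rabs_right r) by lra.
    apply Rle_trans with (M * 1).
    + apply Rmult_le_compat; try apply Rabs_pos; try apply pow_le; auto.
      
      clear -Hr0 Hr1. induction n; simpl; [lra|]. 
      apply Rle_trans with (r * 1); [apply Rmult_le_compat_l; lra| lra].
    + pose proof (Ha 0%nat). pose proof (Rabs_pos (a 0%nat)). lra.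
Qed.


Lemma E_rec01' m k : (m <= 1)%nat ->
  E m (S k) = INR (m + 2 * k + 1) / INR (m + 2 * k + 2) * E m k.
Proof.
  intros Hm. pose proof (E_rec01 m k Hm) as H.
  assert (0 < INR (m + 2 * k + 2)) by (apply lt_0_INR; lia).
  apply (Rmult_eq_reg_l (INR (m + 2 * k + 2))); [|lra]. rewrite H. field. lra.
Qed.

Lemma E_rec2' m k :
  E (m + 2) (S k) = (INR (m + 2 + 2 * k + 1) * E (m + 2) k
  + INR ((m + 2) * (m + 1)) / INR (m + 2 + 2 * k + 1) * E m (S k)) / INR (m + 2 + 2 * k + 2).
Proof.
  pose proof (E_rec2 m k) as H.
  assert (0 < INR (m + 2 + 2 * k + 2)) by (apply lt_0_INR; lia).
  assert (0 < INR (m + 2 + 2 * k + 1)) by (apply lt_0_INR; lia).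
  apply (Rmult_eq_reg_l (INR (m + 2 + 2 * k + 2))); [|lra]. rewrite H. field. split; lra.
Qed.

Definition Icoef m k := E m k / INR (m + 1 + 2 * k).

Lemma rad_E m x : Rabs x < 1 -> Rbar_lt (Rabs x) (CV_radius (E m)).
Proof. apply radius_ge1 with (M := INR (Factorial.fact m)). apply E_bound. Qed.

Lemma rad_I m x : Rabs x < 1 -> Rbar_lt (Rabs x) (CV_radius (Icoef m)).
Proof.
  apply radius_ge1 with (M := INR (Factorial.fact m)). intros n. unfold Icoef.
  assert (1 <= INR (m + 1 + 2 * n)) by (apply (le_INR 1); lia).
  unfold Rdiv. rewrite Rabs_mult, Rabs_inv, (Rabs_right (INR _)) by lra.
  pose proof (E_bound m n). pose proof (Rabs_pos (E m n)).
  assert (0 < / INR (m + 1 + 2 * n) <= 1).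
  { split. apply Rinv_0_lt_compat; lra. rewrite <- Rinv_1. apply Rinv_le_contravar; lra. }
  apply Rle_trans with (Rabs (E m n) * 1); [apply Rmult_le_compat_l; lra|lra].
Qed.

Definition P m x := PSeries (E m) x.
Definition Dp m x := PSeries (PS_derive (E m)) x.
Definition IP m x := PSeries (Icoef m) x.
Definition DI m x := PSeries (PS_derive (Icoef m)) x.

Lemma HP m x : Rabs x < 1 -> is_pseries (E m) x (P m x).
Proof. intros H. apply PSeries_correct, CV_radius_inside, rad_E, H. Qed.
Lemma HD m x : Rabs x < 1 -> is_pseries (PS_derive (E m)) x (Dp m x).
Proof. intros H. apply PSeries_correct, ex_pseries_derive, rad_E, H. Qed.
Lemma HI m x : Rabs x < 1 -> is_pseries (Icoef m) x (IP m x).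
Proof. intros H. apply PSeries_correct, CV_radius_inside, rad_I, H. Qed.
Lemma HDI m x : Rabs x < 1 -> is_pseries (PS_derive (Icoef m)) x (DI m x).
Proof. intros H. apply PSeries_correct, ex_pseries_derive, rad_I, H. Qed.

Lemma pseries_uniq (a : nat -> R) (x l1 l2 : R) : is_pseries a x l1 -> is_pseries a x l2 -> l1 = l2.
Proof. intros H1 H2. apply is_pseries_unique in H1. apply is_pseries_unique in H2. congruence. Qed.

Lemma is_pseries_zero x : is_pseries (fun _ => 0) x 0.
Proof.
  apply is_pseries_R. eapply is_series_ext; [|apply is_series_zero]. intros n; simpl; ring.
Qed.

Lemma pseries_zero_val (a : nat -> R) (x l : R) :
  (forall n, a n = 0) -> is_pseries a x l -> l = 0.
Proof.
  intros Ha H. apply (pseries_uniq a x); auto.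
  eapply is_pseries_ext; [|apply is_pseries_zero]. intros n; rewrite Ha; auto.
Qed.

Lemma R0_eq x : Rabs x < 1 -> 2 * (1 - x) * Dp 0 x - P 0 x = 0.
Proof.
  intros Hx.
  pose proof (is_pseries_lin _ _ _ _ _ 2 (-2) (HD 0 x Hx) (is_pseries_shift _ _ _ (HD 0 x Hx))) as H1.
  pose proof (is_pseries_lin _ _ _ _ _ 1 (-1) H1 (HP 0 x Hx)) as H2.
  apply pseries_zero_val in H2.
  - rewrite <- H2. ring.
  - intros n.
    destruct n as [|j]; unfold PS_derive.
    + rewrite (E_rec01' 0 0) by lia. rewrite E0. simpl. field.
    + rewrite (E_rec01' 0 (S j)) by lia.
      rewrite !plus_INR, !mult_INR, !S_INR. simpl (INR 0). simpl (INR 2). simpl (INR 1).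
      field. pose proof (pos_INR j). lra.
Qed.

Lemma R_comb m x (Hx : Rabs x < 1) :
  is_pseries (fun n => 1 * (1 * (INR m * E m n + 2 * (match n with O => 0 | S j => PS_derive (E m) j end))
      + -(INR m + 1) * (match n with O => 0 | S j => E m j end))
      + -2 * (match n with O => 0 | S j => match j with O => 0 | S i => PS_derive (E m) i end end)) x
    ((1 - x) * (INR m * P m x + 2 * x * Dp m x) - x * P m x).
Proof.
  pose proof (is_pseries_lin _ _ _ _ _ (INR m) 2 (HP m x Hx) (is_pseries_shift _ _ _ (HD m x Hx))) as H1.
  pose proof (is_pseries_lin _ _ _ _ _ 1 (-(INR m + 1)) H1 (is_pseries_shift _ _ _ (HP m x Hx))) as H2.
  pose proof (is_pseries_lin _ _ _ _ _ 1 (-2) H2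
     (is_pseries_shift _ _ _ (is_pseries_shift _ _ _ (HD m x Hx)))) as H3.
  match type of H3 with is_pseries _ _ ?l => replace ((1 - x) * (INR m * P m x + 2 * x * Dp m x) - x * P m x) with l by ring end.
  exact H3.
Qed.

Lemma R1_eq x : Rabs x < 1 -> (1 - x) * (INR 1 * P 1 x + 2 * x * Dp 1 x) - x * P 1 x = 1.
Proof.
  intros Hx.
  pose proof (is_pseries_lin _ _ _ _ _ 1 (-1) (R_comb 1 x Hx) (is_pseries_const 1 x)) as H.
  apply pseries_zero_val in H.
  - lra.
  - intros n. destruct n as [|[|i]]; unfold PS_derive; cbv beta iota.
    + rewrite E0. simpl. ring.
    + rewrite (E_rec01' 1 0) by lia. rewrite E0. simpl. field.
    + rewrite (E_rec01' 1 (S i)) by lia.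
      repeat rewrite ?plus_INR, ?mult_INR, ?S_INR. simpl (INR 0).
      field. pose proof (pos_INR i). lra.
Qed.

Lemma R2_eq m x : Rabs x < 1 ->
  (1 - x) * (INR (m + 2) * P (m + 2) x + 2 * x * Dp (m + 2) x) - x * P (m + 2) x
  = INR ((m + 2) * (m + 1)) * IP m x.
Proof.
  intros Hx.
  pose proof (is_pseries_lin _ _ _ _ _ 1 (- INR ((m + 2) * (m + 1))) (R_comb (m + 2) x Hx) (HI m x Hx)) as H.
  apply pseries_zero_val in H.
  - lra.
  - intros n. unfold Icoef. pose proof (pos_INR m).
    destruct n as [|[|i]]; unfold PS_derive; cbv beta iota.
    + rewrite !E0. repeat rewrite ?plus_INR, ?mult_INR, ?S_INR. simpl (INR 0).
      field. lra.
    + rewrite (E_rec2' m 0) by lia. rewrite !E0.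
      repeat rewrite ?plus_INR, ?mult_INR, ?S_INR. simpl (INR 0).
      field. lra.
    + rewrite (E_rec2' m (S i)) by lia.
      repeat rewrite ?plus_INR, ?mult_INR, ?S_INR. simpl (INR 0).
      pose proof (pos_INR i). field. lra.
Qed.

Lemma Iser_eq m x : Rabs x < 1 -> INR (m + 1) * IP m x + 2 * x * DI m x = P m x.
Proof.
  intros Hx.
  pose proof (is_pseries_lin _ _ _ _ _ (INR (m + 1)) 2 (HI m x Hx) (is_pseries_shift _ _ _ (HDI m x Hx))) as H1.
  pose proof (is_pseries_lin _ _ _ _ _ 1 (-1) H1 (HP m x Hx)) as H.
  apply pseries_zero_val in H.
  - lra.
  - intros n. unfold Icoef. pose proof (pos_INR m).
    destruct n as [|i]; unfold PS_derive; cbv beta iota.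
    + repeat rewrite ?plus_INR, ?mult_INR, ?S_INR. simpl (INR 0).
      field. lra.
    + repeat rewrite ?plus_INR, ?mult_INR, ?S_INR. simpl (INR 0).
      pose proof (pos_INR i). field. lra.
Qed.

Lemma same_deriv (f g df : R -> R) :
  (forall s, Rabs s < 1 -> is_derive f s (df s)) ->
  (forall s, Rabs s < 1 -> is_derive g s (df s)) ->
  f 0 = g 0 -> forall t, Rabs t < 1 -> f t = g t.
Proof.
  intros Hf Hg H0 t Ht.
  assert (Hh : forall s, Rabs s < 1 -> is_derive (fun u => f u - g u) s 0).
  { intros s Hs. replace 0 with (minus (df s) (df s)).
    - apply (is_derive_minus f g); auto.
    - unfold minus, plus, opp; simpl. ring. }
  pose proof (bounded_variation (fun u => f u - g u) (fun _ => 0) 0 0 t) as HB.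
  assert (Rabs (f t - g t - (f 0 - g 0)) <= 0 * Rabs (t - 0)).
  { apply HB. intros s Hs. split.
    - apply Hh. rewrite !Rminus_0_r in Hs. lra.
    - rewrite Rabs_R0. lra. }
  rewrite Rmult_0_l in H. pose proof (Rabs_pos (f t - g t - (f 0 - g 0))).
  assert (f t - g t - (f 0 - g 0) = 0).
  { apply Rabs_eq_0. lra. }
  lra.
Qed.

Lemma abs_sq s : Rabs s < 1 -> Rabs (s ^ 2) < 1.
Proof.
  intros H. rewrite Rabs_right.
  2:{ apply Rle_ge. apply pow2_ge_0. }
  rewrite <- pow2_abs. pose proof (Rabs_pos s). nra.
Qed.

Lemma sq_pos s : Rabs s < 1 -> 0 < 1 - s ^ 2.
Proof. intros H. pose proof (abs_sq s H). rewrite Rabs_right in H0 by (apply Rle_ge, pow2_ge_0). lra. Qed.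

Lemma der_asin s : Rabs s < 1 -> is_derive asin s (/ sqrt (1 - s ^ 2)).
Proof.
  intros H. assert (Hs : -1 < s < 1) by (apply Rabs_def2 in H; lra).
  apply is_derive_Reals.
  pose proof (proj2_sig (derivable_pt_asin s Hs)) as h.
  change (derivable_pt_lim asin s (derive_pt asin s (derivable_pt_asin s Hs))) in h.
  rewrite derive_pt_asin in h.
  replace (s ^ 2) with (s²) by (unfold Rsqr; ring).
  rewrite <- (Rmult_1_l (/ _)). exact h.
Qed.

Lemma der_asin_pow m s : Rabs s < 1 ->
  is_derive (fun u => asin u ^ m) s (INR m * / sqrt (1 - s ^ 2) * asin s ^ pred m).
Proof. intros H. apply (is_derive_pow asin m s). apply der_asin, H. Qed.

Lemma der_sq (a : nat -> R) s :
  (forall x, Rabs x < 1 -> Rbar_lt (Rabs x) (CV_radius a)) -> Rabs s < 1 ->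
  is_derive (fun u => PSeries a (u ^ 2)) s (2 * s * PSeries (PS_derive a) (s ^ 2)).
Proof.
  intros Hr Hs.
  assert (Hd : is_derive (fun u : R => u ^ 2) s (2 * s)) by (auto_derive; [exact I| ring]).
  pose proof (is_derive_comp (PSeries a) (fun u => u ^ 2) s _ _
     (is_derive_PSeries a (s ^ 2) (Hr _ (abs_sq s Hs))) Hd) as H.
  exact H.
Qed.

Lemma der_F m s : Rabs s < 1 ->
  is_derive (fun u => u ^ m * P m (u ^ 2)) s
   (INR m * 1 * s ^ pred m * P m (s ^ 2) + s ^ m * (2 * s * Dp m (s ^ 2))).
Proof.
  intros Hs.
  apply (Derive.is_derive_mult (fun u => u ^ m) (fun u => P m (u ^ 2))).
  - apply (is_derive_pow (fun u => u) m s 1). auto_derive; auto.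
  - unfold P, Dp. apply der_sq; auto. intros; apply rad_E; auto.
Qed.

Lemma der_FI m s : Rabs s < 1 ->
  is_derive (fun u => u ^ (m + 1) * IP m (u ^ 2)) s
   (INR (m + 1) * 1 * s ^ pred (m + 1) * IP m (s ^ 2) + s ^ (m + 1) * (2 * s * DI m (s ^ 2))).
Proof.
  intros Hs.
  apply (Derive.is_derive_mult (fun u => u ^ (m + 1)) (fun u => IP m (u ^ 2))).
  - apply (is_derive_pow (fun u => u) (m + 1) s 1). auto_derive; auto.
  - unfold IP, DI. apply der_sq; auto. intros; apply rad_I; auto.
Qed.

Lemma der_S s : Rabs s < 1 ->
  is_derive (fun u => sqrt (1 - u ^ 2)) s (- s / sqrt (1 - s ^ 2)).
Proof.
  intros Hs. pose proof (sq_pos s Hs).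
  auto_derive.
  - simpl in H. lra.
  - replace (1 + - (s * (s * 1))) with (1 - s ^ 2) by ring. field.
    apply Rgt_not_eq, sqrt_lt_R0; lra.
Qed.

Lemma der_Phi m s : Rabs s < 1 ->
  is_derive (fun u => sqrt (1 - u ^ 2) * (u ^ m * P m (u ^ 2))) s
   (- s / sqrt (1 - s ^ 2) * (s ^ m * P m (s ^ 2)) + sqrt (1 - s ^ 2) *
    (INR m * 1 * s ^ pred m * P m (s ^ 2) + s ^ m * (2 * s * Dp m (s ^ 2)))).
Proof.
  intros Hs. apply (Derive.is_derive_mult (fun u => sqrt (1 - u ^ 2)) (fun u => u ^ m * P m (u ^ 2))).
  - apply der_S; auto.
  - apply der_F; auto.
Qed.

Lemma is_derive_eq (f : R -> R) (x l1 l2 : R) : is_derive f x l1 -> l1 = l2 -> is_derive f x l2.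
Proof. intros H ->. exact H. Qed.

Lemma Ilem m' :
  (forall t, Rabs t < 1 -> sqrt (1 - t ^ 2) * (t ^ m' * P m' (t ^ 2)) = asin t ^ m') ->
  forall t, Rabs t < 1 -> INR (m' + 1) * (t ^ (m' + 1) * IP m' (t ^ 2)) = asin t ^ (m' + 1).
Proof.
  intros IH.
  apply same_deriv with (df := fun s => INR (m' + 1) * / sqrt (1 - s ^ 2) * asin s ^ m').
  - intros s Hs. eapply is_derive_eq.
    + apply is_derive_scal. apply der_FI; auto.
    + replace (pred (m' + 1)) with m' by lia. rewrite <- (IH s Hs).
      pose proof (Iser_eq m' (s ^ 2) (abs_sq s Hs)) as HI.
      pose proof (sq_pos s Hs). pose proof (sqrt_lt_R0 _ H) as HS.
      rewrite <- HI. rewrite pow_add. simpl (s ^ 1). field; lra.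
  - intros s Hs. eapply is_derive_eq.
    + apply der_asin_pow; auto.
    + replace (pred (m' + 1)) with m' by lia. ring.
  - rewrite !pow_i by lia. rewrite asin_0, pow_i by lia. ring.
Qed.

Lemma main_id : forall m t, Rabs t < 1 -> sqrt (1 - t ^ 2) * (t ^ m * P m (t ^ 2)) = asin t ^ m.
Proof.
  intros m. induction m as [m IH] using (well_founded_induction Wf_nat.lt_wf).
  apply same_deriv with (df := fun s => INR m * / sqrt (1 - s ^ 2) * asin s ^ pred m).
  - intros s Hs. eapply is_derive_eq; [apply der_Phi; auto|].
    pose proof (sq_pos s Hs). pose proof (sqrt_lt_R0 _ H) as HS.
    pose proof (sqrt_sqrt (1 - s ^ 2) ltac:(lra)) as HSS.
    assert (Key : (1 - s ^ 2) * (INR m * 1 * s ^ pred m * P m (s ^ 2) + s ^ m * (2 * s * Dp m (s ^ 2)))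
                  - s * (s ^ m * P m (s ^ 2)) = INR m * asin s ^ pred m).
    { destruct m as [|[|m']].
      - pose proof (R0_eq (s ^ 2) (abs_sq s Hs)). simpl pred. simpl INR.
        replace ((1 - s ^ 2) * (0 * 1 * s ^ 0 * P 0 (s ^ 2) + s ^ 0 * (2 * s * Dp 0 (s ^ 2))) -
                   s * (s ^ 0 * P 0 (s ^ 2))) with (s * (2 * (1 - s ^ 2) * Dp 0 (s ^ 2) - P 0 (s ^ 2))) by ring.
        rewrite H0. ring.
      - pose proof (R1_eq (s ^ 2) (abs_sq s Hs)) as H1. simpl pred. simpl (asin s ^ 0).
        transitivity ((1 - s ^ 2) * (INR 1 * P 1 (s ^ 2) + 2 * s ^ 2 * Dp 1 (s ^ 2)) - s ^ 2 * P 1 (s ^ 2)).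
        + simpl pow. ring.
        + rewrite H1. simpl. ring.
      - replace (S (S m')) with (m' + 2)%nat in * by lia.
        replace (pred (m' + 2)) with (m' + 1)%nat by lia.
        pose proof (R2_eq m' (s ^ 2) (abs_sq s Hs)) as H2.
        pose proof (Ilem m' (IH m' ltac:(lia)) s Hs) as H3.
        rewrite <- H3.
        replace ((1 - s ^ 2) * (INR (m' + 2) * 1 * s ^ (m' + 1) * P (m' + 2) (s ^ 2) +
                   s ^ (m' + 2) * (2 * s * Dp (m' + 2) (s ^ 2))) - s * (s ^ (m' + 2) * P (m' + 2) (s ^ 2)))
          with (s ^ (m' + 1) * ((1 - s ^ 2) * (INR (m' + 2) * P (m' + 2) (s ^ 2) + 2 * s ^ 2 * Dp (m' + 2) (s ^ 2))
                  - s ^ 2 * P (m' + 2) (s ^ 2))).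
        2:{ rewrite !pow_add. simpl (s ^ 1). simpl (s ^ 2). ring. }
        rewrite H2. rewrite mult_INR. ring. }
    apply (Rmult_eq_reg_l (sqrt (1 - s ^ 2))); [|lra].
    replace (sqrt (1 - s ^ 2) * (INR m * / sqrt (1 - s ^ 2) * asin s ^ pred m))
      with (INR m * asin s ^ pred m) by (field; lra).
    rewrite <- Key.
    replace (sqrt (1 - s ^ 2) * (- s / sqrt (1 - s ^ 2) * (s ^ m * P m (s ^ 2)) +
       sqrt (1 - s ^ 2) * (INR m * 1 * s ^ pred m * P m (s ^ 2) + s ^ m * (2 * s * Dp m (s ^ 2)))))
      with (sqrt (1 - s ^ 2) * sqrt (1 - s ^ 2) * (INR m * 1 * s ^ pred m * P m (s ^ 2) + s ^ m * (2 * s * Dp m (s ^ 2)))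
            - s * (s ^ m * P m (s ^ 2))) by (field; lra).
    rewrite HSS. field; lra.
  - intros s Hs. apply der_asin_pow; auto.
  - destruct m as [|m].
    + simpl. unfold P. rewrite Rmult_0_l, PSeries_0, E0. replace (1 - 0) with 1 by ring. rewrite sqrt_1. ring.
    + rewrite !pow_i by lia. rewrite asin_0, pow_i by lia. ring.
Qed.

Theorem corollary2p1 (m : nat) (t : R) (ht : Rabs t < 1) :
  ex_series (fun k => cor_term m t (S k)) /\
  (asin t) ^ m / sqrt (1 - t ^ 2)
  = t ^ m * (1 + Series (fun k => cor_term m t (S k))).
Proof.
  pose proof (HP m (t ^ 2) (abs_sq t ht)) as H.
  apply is_pseries_R in H.
  assert (Hs : is_series (fun k => cor_term m t (S k)) (P m (t ^ 2) - 1)).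
  { apply (is_series_ext (fun k => E m (S k) * (t ^ 2) ^ (S k))).
    { intros k. rewrite cor_term_E. reflexivity. }
    apply (is_series_incr_1 (fun n => E m n * (t ^ 2) ^ n)).
    match goal with |- is_series _ ?l => replace l with (P m (t ^ 2)) end.
    - exact H.
    - rewrite E0. unfold plus; simpl. ring. }
  split.
  - eexists; exact Hs.
  - rewrite (is_series_unique _ _ Hs).
    pose proof (sq_pos t ht). pose proof (sqrt_lt_R0 _ H0).
    rewrite <- (main_id m t ht). field; lra.
Qed.
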